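(* Let $\mathcal{F}$ be a set of functions satisfying premise (P) below, and let $F\in\mathcal{F}$ have even arity. Then either every closed $\{\neq_2\}\mid\{F\}$-network (with any positive number of $F$-side vertices) has value $0$, or every such network has nonzero value.
   Context: $\neq_2(x,y)=1$ if $x\ne y$ and $0$ otherwise. $\mathrm{Holant}_{\neq}(\mathcal{F})$ denotes $\#\{\neq_2\}\mid\mathcal{F}$: inputs are finite bipartite multigraphs where every vertex on one side has degree 2 and carries $\neq_2$, and every vertex $v$ on the other (''$F$-side'') carries some $F_v\in\mathcal{F}$ of arity $\deg(v)$ with an ordering of incident edges; value $\sum_{\sigma:E\to\{0,1\}}\prod(\text{vertex functions})$. Gadgets: such networks with dangling edges at $F$-side vertices; realizable functions are functions of gadgets. Premise (P): every realizable binary function is $\lambda\cdot\neq_2$ ($\lambda\in\mathbb{C}$), and every realizable arity-4 function is $\lambda\,\neq_2(x_{\tau(1)},x_{\tau(2)})\neq_2(x_{\tau(3)},x_{\tau(4)})$ for some $\lambda\in\mathbb{C}$ and permutation $\tau$ of $\{1,2,3,4\}$. *)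

(* Defs.v *)
(* complex numbers C = R[i] for an arbitrary realType R
   (every realType is isomorphic to the reals, so R[i] is the field of
   complex numbers). *)
From HB Require Import structures.
From mathcomp Require Import all_boot all_order all_algebra.
From mathcomp Require Import fingroup perm reals.
From mathcomp Require Export complex.
Set Implicit Arguments.
Unset Strict Implicit.
Unset Printing Implicit Defensive.
Import Order.TTheory GRing.Theory Num.Theory.
Local Open Scope ring_scope.

Section Holant.
Variable C : numClosedFieldType.

Definition sigfun (n : nat) := {ffun {ffun 'I_n -> bool} -> C}.
Definition signature := {n : nat & sigfun n}.

Definition neq2v (a b : bool) : C := if a != b then 1 else 0.
Definition neq2 : sigfun 2 :=
  [ffun x : {ffun 'I_2 -> bool} => neq2v (x ord0) (x (Ordinal (isT : 1 < 2)%N))].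

(* A gadget (= network for #{neq_2} | F with k dangling edges).
   - F-side vertices: 'I_nV; vertex v has arity (degree) ar v and carries
     the function fn v, its incident edges being ordered as 'I_(ar v).
   - The edges of the graph are exactly the "ports" (v, i), i < ar v.
   - There are nD degree-2 vertices carrying neq_2; the d-th one is
     adjacent to the two edges (ends d).1 and (ends d).2.
   - Each edge is adjacent to at most one neq_2 vertex, and at most once
     (the 2*nD ports listed by ends are pairwise distinct).
   - The edges adjacent to no neq_2 vertex are the dangling edges; they are
     listed (ordered) by ext : 'I_k -> port, bijectively. *)
Definition port (nV : nat) (ar : 'I_nV -> nat) := {v : 'I_nV & 'I_(ar v)}.

Record gadget (k : nat) := Gadget {
  nV : nat;
  ar : 'I_nV -> nat;
  fn : forall v : 'I_nV, sigfun (ar v);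
  nD : nat;
  ends : 'I_nD -> port ar * port ar;
  ext : 'I_k -> port ar;
  ends_ne : forall d, (ends d).1 != (ends d).2;
  ends_inj1 : forall d d', (ends d).1 = (ends d').1 -> d = d';
  ends_inj2 : forall d d', (ends d).2 = (ends d').2 -> d = d';
  ends_disj : forall d d', (ends d).1 != (ends d').2;
  ext_inj : injective ext;
  ext_dangling : forall p : port ar,
    (exists i, ext i = p) <-> (forall d, (ends d).1 != p /\ (ends d).2 != p)
}.

Arguments nV {k} g.
Arguments ar {k} g v.
Arguments fn {k} g v.
Arguments nD {k} g.
Arguments ends {k} g d.
Arguments ext {k} g i.

Definition gval k (g : gadget k) (x : {ffun 'I_k -> bool}) : C :=
  \sum_(s : {ffun port (ar g) -> bool} | [forall i, s (ext g i) == x i])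
     ((\prod_(v : 'I_(nV g)) fn g v [ffun j => s (Tagged (fun v => 'I_(ar g v)) j)]) *
      \prod_(d : 'I_(nD g)) neq2v (s (ends g d).1) (s (ends g d).2)).

Definition over k (calF : signature -> Prop) (g : gadget k) :=
  forall v, calF (existT _ (ar g v) (fn g v)).

Definition realizable (calF : signature -> Prop) k (f : sigfun k) :=
  exists g : gadget k, over calF g /\ forall x, gval g x = f x.

Definition premiseP (calF : signature -> Prop) :=
  (forall f : sigfun 2, realizable calF f ->
     exists lam : C, forall x, f x = lam * neq2 x) /\
  (forall f : sigfun 4, realizable calF f ->
     exists (lam : C) (tau : {perm 'I_4}), forall x : {ffun 'I_4 -> bool},
       f x = lam * neq2v (x (tau (inord 0))) (x (tau (inord 1)))
                 * neq2v (x (tau (inord 2))) (x (tau (inord 3)))).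

Definition closed_value (g : gadget 0) : C := gval g [ffun i => false].

Definition F_network (F : signature) (g : gadget 0) :=
  (0 < nV g)%N /\ forall v, existT _ (ar g v) (fn g v) = F.

End Holant.

(* Main.v *)
Require Import Defs.
From HB Require Import structures.
From mathcomp Require Import all_boot all_order all_algebra.
From mathcomp Require Import reals complex.
From mathcomp Require Import fingroup perm zify.
Import Order.TTheory GRing.Theory Num.Theory.
Local Open Scope ring_scope.
Set Implicit Arguments.
Unset Strict Implicit.
Unset Printing Implicit Defensive.
Notation arg g := (@ar _ _ g).
Notation endg g := (@ends _ _ g).
Notation fng g := (@fn _ _ g).
Section Fact.
Variable C : numClosedFieldType.

Lemma sum_prod_dep (I : finType) (a : I -> nat)
  (G : forall i, {ffun 'I_(a i) -> bool} -> C) :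
  \sum_(s : {ffun {i : I & 'I_(a i)} -> bool})
     \prod_i G i [ffun j => s (Tagged (fun i => 'I_(a i)) j)] =
  \prod_i \sum_(t : {ffun 'I_(a i) -> bool}) G i t.
Proof.
pose T_ := fun i => {ffun 'I_(a i) -> bool}.
pose P_ := fun i => [ffun t : T_ i => G i t].
pose h := fun t : fprod T_ => [ffun p : {i : I & 'I_(a i)} => t (tag p) (tagged p)].
pose k := fun s : {ffun {i : I & 'I_(a i)} -> bool} =>
   fprod_of_fun (fun i => [ffun j => s (Tagged (fun i => 'I_(a i)) j)] : T_ i).
have hK : cancel h k.
  move=> t; apply/fprodP => i; rewrite fprodE; apply/ffunP => j.
  by rewrite !ffunE.
have kK : cancel k h.
  move=> s; apply/ffunP => -[i j]; rewrite !ffunE /= fprodE ffunE.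
  by [].
rewrite (reindex h); last by apply: onW_bij; exists k.
transitivity (\sum_(t : fprod T_ | predT (fprod_fun t)) \prod_i P_ i (t i)).
  apply: eq_bigr => t _; apply: eq_bigr => i _; rewrite /P_ ffunE; congr (G i _).
  by apply/ffunP => j; rewrite !ffunE.
rewrite big_fprod_dep.
transitivity (\prod_i \sum_(j in tagged_with T_ i) untag 0 (P_ i) j); last first.
  apply: eq_bigr => i _.
  transitivity (\sum_(t : {ffun 'I_(a i) -> bool}) P_ i t); last by apply: eq_bigr => t _; rewrite /P_ ffunE.
  exact: (esym (@big_tag _ _ _ _ T_ (fun i t => P_ i t) i)).
rewrite bigA_distr_big_dep; apply: eq_bigl => f.
by rewrite andbT.
Qed.
End Fact.
Section Canon.
Variable C : numClosedFieldType.

Definition pn (a j : nat) : nat := if odd j then j.-1 else if (j.+1 < a)%N then j.+1 else j.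
Lemma pn_lt a j : (j < a)%N -> (pn a j < a)%N.
Proof.
rewrite /pn => ja; case: ifP => _; first by apply: leq_ltn_trans ja; exact: leq_pred.
by case: ifP.
Qed.
Definition partner a (j : 'I_a) : 'I_a := Ordinal (pn_lt (ltn_ord j)).

Lemma pn_even a j : ~~ odd a -> (j < a)%N -> ~~ odd j -> (j.+1 < a)%N.
Proof.
move=> ea ja ej; rewrite ltn_neqAle ja andbT; apply/negP => /eqP E.
by move: ea; rewrite -E /= ej.
Qed.

Lemma partnerK a : ~~ odd a -> involutive (@partner a).
Proof.
move=> ea j; apply: val_inj => /=; rewrite /pn.
have ja := ltn_ord j.
case oj: (odd j).
  case: j ja oj => [[|j] //= ja oj].
  by rewrite /= oj /= => /negbTE ->.
by rewrite (pn_even ea ja) ?oj //= oj.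
Qed.

Lemma partner_neq a (j : 'I_a) : ~~ odd a -> partner j != j.
Proof.
move=> ea; apply/eqP => /(congr1 val) /=; rewrite /pn.
have ja := ltn_ord j.
case oj: (odd j).
  by case: (nat_of_ord j) oj => [|k] //= _; lia.
by rewrite (pn_even ea ja) ?oj //; lia.
Qed.

Definition pport nV (ar : 'I_nV -> nat) (p : port ar) : port ar :=
  Tagged (fun v => 'I_(ar v)) (partner (tagged p)).

Lemma pportK nV (ar : 'I_nV -> nat) : (forall v, ~~ odd (ar v)) -> involutive (@pport nV ar).
Proof. by move=> ea [v j]; rewrite /pport /= partnerK. Qed.

Lemma pport_neq nV (ar : 'I_nV -> nat) (p : port ar) : (forall v, ~~ odd (ar v)) -> pport p != p.
Proof.
move=> ea; apply/eqP => /(congr1 (fun p : port ar => nat_of_ord (tagged p))).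
case: p => v j /= E; have := partner_neq j (ea v); by rewrite -val_eqE /= E eqxx.
Qed.

Definition canb k (g : gadget C k) (d : 'I_(nD g)) :=
  (endg g d).2 == pport (endg g d).1.

Definition okb a (t : {ffun 'I_a -> bool}) := [forall j, t j != t (partner j)].

Definition Phi (S : signature C) :=
  \sum_(t : {ffun 'I_(projT1 S) -> bool}) projT2 S t * (okb t)%:R.

Lemma prod_ind (I : finType) (b : I -> bool) :
  \prod_i ((b i)%:R : C) = ([forall i, b i])%:R.
Proof.
case: (boolP [forall i, b i]) => [/forallP H|/forallPn [i Hi]].
  by rewrite big1 // => i _; rewrite H.
by rewrite (bigD1 i) //= (negbTE Hi) mul0r.
Qed.

Lemma neq2vE (a b : bool) : neq2v C a b = (a != b)%:R.
Proof. by rewrite /neq2v; case: (a != b). Qed.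

Lemma cover0 (g : gadget C 0) (p : port (arg g)) :
  exists d, (endg g d).1 = p \/ (endg g d).2 = p.
Proof.
case: (boolP [exists d, ((endg g d).1 == p) || ((endg g d).2 == p)]).
  by case/existsP => d /orP [] /eqP H; exists d; [left|right].
move/existsPn => H.
have : forall d, (endg g d).1 != p /\ (endg g d).2 != p.
  by move=> d; have := H d; rewrite negb_or => /andP.
by move/(@ext_dangling _ _ g p) => [[]].
Qed.

Lemma canon_value (g : gadget C 0) :
  (forall v, ~~ odd (arg g v)) -> (forall d, canb (g:=g) d) ->
  closed_value g = \prod_v Phi (existT _ (arg g v) (fng g v)).
Proof.
move=> ea cg; rewrite /closed_value /Defs.gval.
have EE (F : {ffun port (arg g) -> bool} -> C) :
  \sum_(s : {ffun port (arg g) -> bool} | [forall i, s (ext g i) == [ffun=> false] i]) F s = \sum_s F s.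
  by apply: eq_bigl => s; apply/forallP => -[].
rewrite EE.
transitivity (\prod_v \sum_(t : {ffun 'I_(arg g v) -> bool}) fng g v t * (okb t)%:R); last by [].
rewrite -(sum_prod_dep (fun v t => fng g v t * (okb t)%:R)).
apply: eq_bigr => s _; rewrite big_split /=; congr (_ * _).
rewrite (eq_bigr (fun d => ((s (endg g d).1 != s (endg g d).2))%:R)); last by move=> d _; rewrite neq2vE.
rewrite !prod_ind; congr ((nat_of_bool _)%:R); apply/forallP/forallP.
  move=> H v; apply/forallP => j; rewrite !ffunE.
  have [d [E|E]] := cover0 (Tagged (fun v => 'I_(arg g v)) j).
    by have := H d; rewrite (eqP (cg d)) E.
  have E1 : (endg g d).1 = pport (Tagged (fun v => 'I_(arg g v)) j).
    by rewrite -E (eqP (cg d)) pportK.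
  by have := H d; rewrite E E1 eq_sym.
move=> H d; rewrite (eqP (cg d)); case: (endg g d).1 => v j.
by have /forallP := H v => /(_ j); rewrite !ffunE.
Qed.

End Canon.
Section Moves.
Variable C : numClosedFieldType.

Lemma dang0 nV (ar : 'I_nV -> nat) nD (ends : 'I_nD -> port ar * port ar)
  (ext : 'I_0 -> port ar) :
  (forall p, exists d, (ends d).1 = p \/ (ends d).2 = p) ->
  forall p, (exists i, ext i = p) <-> (forall d, (ends d).1 != p /\ (ends d).2 != p).
Proof.
move=> cov p; split; first by case=> -[].
move=> H; have [d [E|E]] := cov p; have := H d; rewrite E eqxx; by case.
Qed.

Section Swap.
Variables (g : gadget C 0) (d1 d2 : 'I_(nD g)).
Definition sends (d : 'I_(nD g)) := ((endg g d).1, (endg g (tperm d1 d2 d)).2).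
Lemma sw_ne d : (sends d).1 != (sends d).2.
Proof. exact: ends_disj. Qed.
Lemma sw_inj1 d d' : (sends d).1 = (sends d').1 -> d = d'.
Proof. exact: ends_inj1. Qed.
Lemma sw_inj2 d d' : (sends d).2 = (sends d').2 -> d = d'.
Proof. by move/ends_inj2; apply: perm_inj. Qed.
Lemma sw_disj d d' : (sends d).1 != (sends d').2.
Proof. exact: ends_disj. Qed.
Lemma sw_cov p : exists d, (sends d).1 = p \/ (sends d).2 = p.
Proof.
have [d [E|E]] := cover0 p; first by exists d; left.
by exists (tperm d1 d2 d); right; rewrite /sends /= tpermK.
Qed.
Definition swapg : gadget C 0 :=
  @Gadget C 0 (nV g) (arg g) (fng g) (nD g) sends (ext g) sw_ne sw_inj1 sw_inj2 sw_disj
    (@ext_inj _ _ g) (dang0 (ext g) sw_cov).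
End Swap.

Section Flip.
Variables (g : gadget C 0) (d0 : 'I_(nD g)).
Definition fends (d : 'I_(nD g)) :=
  if d == d0 then ((endg g d).2, (endg g d).1) else endg g d.
Lemma fl_ne d : (fends d).1 != (fends d).2.
Proof. by rewrite /fends; case: ifP => _ /=; [rewrite eq_sym|]; exact: ends_ne. Qed.
Lemma fl_inj1 d d' : (fends d).1 = (fends d').1 -> d = d'.
Proof.
rewrite /fends; case: eqP => [->|n1]; case: eqP => [->|n2] //= E.
- by move: (ends_disj d' d0); rewrite E eqxx.
- by move: (ends_disj d d0); rewrite E eqxx.
- exact: ends_inj1.
Qed.
Lemma fl_inj2 d d' : (fends d).2 = (fends d').2 -> d = d'.
Proof.
rewrite /fends; case: eqP => [->|n1]; case: eqP => [->|n2] //= E.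
- by move: (ends_disj d0 d'); rewrite E eqxx.
- by move: (ends_disj d0 d); rewrite E eqxx.
- exact: ends_inj2.
Qed.
Lemma fl_disj d d' : (fends d).1 != (fends d').2.
Proof.
rewrite /fends; case: (d =P d0) => [->|n1]; case: (d' =P d0) => [->|n2]; rewrite ?eqxx /=.
- by rewrite eq_sym ends_ne.
- by apply/eqP => /ends_inj2 E; apply: n2.
- by apply/eqP => /ends_inj1 E; apply: n1.
- exact: ends_disj.
Qed.
Lemma fl_cov p : exists d, (fends d).1 = p \/ (fends d).2 = p.
Proof.
have [d E] := cover0 p; exists d; rewrite /fends; case: eqP => _ //=.
by case: E; [right|left].
Qed.
Definition flipg : gadget C 0 :=
  @Gadget C 0 (nV g) (arg g) (fng g) (nD g) fends (ext g) fl_ne fl_inj1 fl_inj2 fl_disj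
    (@ext_inj _ _ g) (dang0 (ext g) fl_cov).
End Flip.

End Moves.
Section Reach.
Variable C : numClosedFieldType.

Definition noncan (g : gadget C 0) := [set d | ~~ canb (g:=g) d].

Lemma step_swap (g : gadget C 0) d1 d2 : (forall v, ~~ odd (arg g v)) ->
  ~~ canb (g:=g) d1 -> (endg g d2).2 = pport (endg g d1).1 ->
  d1 != d2 /\ (#|noncan (swapg d1 d2)| < #|noncan g|)%N.
Proof.
move=> ea nc1 E.
have ne : d1 != d2.
  by apply/eqP => ed; move: nc1; rewrite /canb ed E -ed eqxx.
have nc2 : ~~ canb (g:=g) d2.
  apply/negP => /eqP; rewrite E => /(can_inj (pportK ea)) /ends_inj1 ed.
  by move: ne; rewrite ed eqxx.
split=> //.
have sub : noncan (swapg d1 d2) \subset noncan g :\ d1.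
  apply/subsetP => d; rewrite !inE.
  case: (d =P d1) => [->|n1].
    by rewrite /canb /= /sends tpermL E eqxx.
  case: (d =P d2) => [->|n2]; first by rewrite nc2.
  rewrite /canb /= /sends tpermD //; apply/eqP => e; [apply: n1|apply: n2]; by rewrite e.
rewrite (cardsD1 d1 (noncan g)) inE nc1 add1n ltnS; exact: subset_leq_card.
Qed.

Lemma noncan_flip (g : gadget C 0) d2 : ~~ canb (g:=g) d2 ->
  noncan (flipg d2) \subset noncan g.
Proof.
move=> nc2; apply/subsetP => d; rewrite !inE /canb /= /fends.
by case: (d =P d2) => [->|n] //=; rewrite nc2.
Qed.

Lemma reach (Q : gadget C 0 -> Prop) :
  (forall g d1 d2, d1 != d2 -> Q g -> Q (@swapg C g d1 d2)) ->
  (forall g d, Q g -> Q (@flipg C g d)) ->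
  forall g, (forall v, ~~ odd (arg g v)) -> Q g ->
  exists g', Q g' /\ (forall v, ~~ odd (arg g' v)) /\ forall d, canb (g:=g') d.
Proof.
move=> Hs Hf g; move: {2}#|noncan g| (leqnn #|noncan g|) => n.
elim: n g => [|n IH] g Hn ea Qg.
  exists g; split=> //; split=> // d; apply/negPn/negP => nd.
  by move: Hn; rewrite leqn0 => /eqP/cards0_eq/setP/(_ d); rewrite !inE nd.
case: (boolP [exists d, ~~ canb (g:=g) d]); last first.
  by move/existsPn => H; exists g; split=> //; split=> // d; apply/negPn/H.
case/existsP => d1 nc1.
have [d2 [E|E]] := cover0 (pport (endg g d1).1).
  have ne : d1 != d2.
    by apply/eqP => ed; move: (pport_neq (endg g d1).1 ea); rewrite -E -ed eqxx.
  have nc2 : ~~ canb (g:=g) d2.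
    apply/negP => /eqP; rewrite E pportK // => E2.
    by move: (ends_disj d1 d2); rewrite E2 eqxx.
  pose g1 := flipg d2.
  have nc1' : ~~ canb (g:=g1) d1.
    by rewrite /canb /= /fends (negbTE ne).
  have E' : (endg g1 d2).2 = pport (endg g1 d1).1.
    by rewrite /= /fends eqxx (negbTE ne) /= E.
  have [ne' lt] := @step_swap g1 d1 d2 ea nc1' E'.
  apply: (IH (@swapg _ g1 d1 d2)) => //; last by apply: Hs => //; apply: Hf.
  rewrite -ltnS; apply: leq_trans lt _; apply: leq_trans Hn.
  exact: subset_leq_card (noncan_flip nc2).
have [ne lt] := step_swap ea nc1 E.
apply: (IH (swapg d1 d2)) => //; last by apply: Hs.
by rewrite -ltnS; apply: leq_trans lt _.
Qed.

End Reach.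
Section Cut.
Variable C : numClosedFieldType.
Variables (g : gadget C 0) (d1 : 'I_(nD g)) (d2' : 'I_(nD g).-1).
Let d2 := lift d1 d2'.
Let e1 := endg g d1.
Let e2 := endg g d2.
Definition Lc (i : 'I_(nD g).-1.-1) : 'I_(nD g) := lift d1 (lift d2' i).
Definition cends i := endg g (Lc i).
Definition cext (i : 'I_4) : port (arg g) :=
  match nat_of_ord i with 0 => e1.1 | 1 => e1.2 | 2 => e2.1 | _ => e2.2 end.

Lemma d12 : d1 != d2. Proof. exact: neq_lift. Qed.
Lemma Lc_inj : injective Lc.
Proof. by move=> i j /lift_inj /lift_inj. Qed.
Lemma Lc_d1 i : Lc i != d1.
Proof. by rewrite eq_sym neq_lift. Qed.
Lemma Lc_d2 i : Lc i != d2.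
Proof. by apply/eqP => /lift_inj /eqP; rewrite eq_sym (negbTE (neq_lift _ _)). Qed.
Lemma Lc_surj d : d != d1 -> d != d2 -> exists i, Lc i = d.
Proof.
move=> n1 n2; case: (unliftP d1 d) => [j Ej|E]; last by move: n1; rewrite E eqxx.
case: (unliftP d2' j) => [i Ei|E]; first by exists i; rewrite /Lc -Ei -Ej.
by move: n2; rewrite Ej E eqxx.
Qed.

Lemma c_ne i : (cends i).1 != (cends i).2. Proof. exact: ends_ne. Qed.
Lemma c_inj1 i j : (cends i).1 = (cends j).1 -> i = j.
Proof. by move/ends_inj1/Lc_inj. Qed.
Lemma c_inj2 i j : (cends i).2 = (cends j).2 -> i = j.
Proof. by move/ends_inj2/Lc_inj. Qed.
Lemma c_disj i j : (cends i).1 != (cends j).2. Proof. exact: ends_disj. Qed.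

Lemma ne_inj1 (a b : 'I_(nD g)) : a != b -> (endg g a).1 != (endg g b).1.
Proof. by move=> nab; apply/eqP => /ends_inj1 E; move: nab; rewrite E eqxx. Qed.
Lemma ne_inj2 (a b : 'I_(nD g)) : a != b -> (endg g a).2 != (endg g b).2.
Proof. by move=> nab; apply/eqP => /ends_inj2 E; move: nab; rewrite E eqxx. Qed.

Lemma c_ext_inj : injective cext.
Proof.
have f12 : e1.1 != e1.2 := ends_ne d1.
have f13 : e1.1 != e2.1 := ne_inj1 d12.
have f14 : e1.1 != e2.2 := ends_disj d1 d2.
have f23 : e2.1 != e1.2 := ends_disj d2 d1.
have f24 : e1.2 != e2.2 := ne_inj2 d12.
have f34 : e2.1 != e2.2 := ends_ne d2.
move=> [[|[|[|k]]] Hi] [[|[|[|k']]] Hj]; rewrite /cext /= => E; apply: val_inj => /=;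
  try lia; move/eqP: E;
  rewrite ?(negbTE f12, negbTE f13, negbTE f14, negbTE f23, negbTE f24, negbTE f34) //;
  rewrite eq_sym ?(negbTE f12, negbTE f13, negbTE f14, negbTE f23, negbTE f24, negbTE f34) //.
Qed.

Lemma c_dang p : (exists i, cext i = p) <-> (forall i, (cends i).1 != p /\ (cends i).2 != p).
Proof.
split.
  case=> -[[|[|[|k]]] Hi] <- j; rewrite /cext /cends /=.
  - by split; [apply: ne_inj1; exact: Lc_d1 | rewrite eq_sym; apply: ends_disj].
  - by split; [apply: ends_disj | apply: ne_inj2; exact: Lc_d1].
  - by split; [apply: ne_inj1; exact: Lc_d2 | rewrite eq_sym; apply: ends_disj].
  - by split; [apply: ends_disj | apply: ne_inj2; exact: Lc_d2].
move=> H; have [d Ed] := cover0 p.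
case: (d =P d1) => [Dd|n1].
  case: Ed => E; [exists (@Ordinal 4 0 isT) | exists (@Ordinal 4 1 isT)];
    by rewrite /cext /= /e1 -Dd.
case: (d =P d2) => [Dd|n2].
  case: Ed => E; [exists (@Ordinal 4 2 isT) | exists (@Ordinal 4 3 isT)];
    by rewrite /cext /= /e2 -Dd.
have [i Ei] := Lc_surj (introN eqP n1) (introN eqP n2).
by have := H i; rewrite /cends Ei; case: Ed => ->; rewrite eqxx; case.
Qed.

Definition cutg : gadget C 4 :=
  @Gadget C 4 (nV g) (arg g) (fng g) (nD g).-1.-1 cends cext c_ne c_inj1 c_inj2 c_disj
    c_ext_inj c_dang.

End Cut.
Section Pos.
Variable C : numClosedFieldType.

Definition o0 : 'I_4 := @Ordinal 4 0 isT.
Definition o1 : 'I_4 := @Ordinal 4 1 isT.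
Definition o2 : 'I_4 := @Ordinal 4 2 isT.
Definition o3 : 'I_4 := @Ordinal 4 3 isT.

Definition cands : seq (seq bool) := [:: [:: false; true; false; true]; [:: false; true; true; false]; [:: false; false; true; true]].
Definition i4 := iota 0 4.
Lemma w1 : all (fun a => all (fun b => all (fun c => all (fun d => uniq [:: a;b;c;d] ==>
  has (fun l => let x := nth false l in [&& x a != x b, x c != x d, x 0%N != x 1%N & x 2%N != x 3%N]) cands) i4) i4) i4) i4.
Proof. by []. Qed.
Lemma w2 : all (fun a => all (fun b => all (fun c => all (fun d => uniq [:: a;b;c;d] ==>
  has (fun l => let x := nth false l in [&& x a != x b, x c != x d, x 0%N != x 3%N & x 2%N != x 1%N]) cands) i4) i4) i4) i4.
Proof. by []. Qed.

Definition Nt (tau : {perm 'I_4}) (x : {ffun 'I_4 -> bool}) : C :=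
  neq2v C (x (tau (inord 0))) (x (tau (inord 1))) * neq2v C (x (tau (inord 2))) (x (tau (inord 3))).
Definition W1 (x : {ffun 'I_4 -> bool}) : C := neq2v C (x o0) (x o1) * neq2v C (x o2) (x o3).
Definition W2 (x : {ffun 'I_4 -> bool}) : C := neq2v C (x o0) (x o3) * neq2v C (x o2) (x o1).

Lemma neq2v_ge0 a b : 0 <= neq2v C a b.
Proof. by rewrite /neq2v; case: ifP => _; rewrite ?ler01 ?lexx. Qed.

Lemma psum_ne0 (F : {ffun 'I_4 -> bool} -> C) x0 :
  (forall x, 0 <= F x) -> 0 < F x0 -> \sum_x F x != 0.
Proof.
move=> H0 H1; apply: lt0r_neq0; rewrite (bigD1 x0) //=.
by apply: (lt_le_trans H1); rewrite lerDl; apply: sumr_ge0 => x _.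
Qed.

Lemma in4 (a : 'I_4) : (nat_of_ord a \in i4).
Proof. by rewrite mem_iota ltn_ord. Qed.

Lemma tau_uniq (tau : {perm 'I_4}) :
  uniq [:: val (tau (inord 0)); val (tau (inord 1)); val (tau (inord 2)); val (tau (inord 3))].
Proof.
have -> : [:: val (tau (inord 0)); val (tau (inord 1)); val (tau (inord 2)); val (tau (inord 3))]
  = map (fun i => val (tau i)) [:: inord 0; inord 1; inord 2; inord 3] by [].
rewrite map_inj_uniq; last by move=> i j /val_inj /perm_inj.
by rewrite /= !inE -!val_eqE /= !inordK.
Qed.

Lemma S_ne0 (tau : {perm 'I_4}) :
  (\sum_x Nt tau x * W1 x != 0) /\ (\sum_x Nt tau x * W2 x != 0).
Proof.
set a := val (tau (inord 0)); set b := val (tau (inord 1)).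
set c := val (tau (inord 2)); set d := val (tau (inord 3)).
have U := tau_uniq tau.
have ge0 W : (forall x, 0 <= W x) -> forall x, 0 <= Nt tau x * W x.
  by move=> HW x; apply: mulr_ge0 => //; apply: mulr_ge0; apply: neq2v_ge0.
have gW1 x : 0 <= W1 x by apply: mulr_ge0; apply: neq2v_ge0.
have gW2 x : 0 <= W2 x by apply: mulr_ge0; apply: neq2v_ge0.
split.
  have := allP w1 a (in4 _) => /allP /(_ b (in4 _)) /allP /(_ c (in4 _)) /allP /(_ d (in4 _)).
  rewrite U implyTb; case/hasP => l _ /=; case/and4P => h1 h2 h3 h4.
  apply: (@psum_ne0 _ [ffun i : 'I_4 => nth false l i]); first exact: ge0.
  by rewrite /Nt /W1 !ffunE /neq2v h1 h2 h3 h4 !mulr1 ltr01.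
have := allP w2 a (in4 _) => /allP /(_ b (in4 _)) /allP /(_ c (in4 _)) /allP /(_ d (in4 _)).
rewrite U implyTb; case/hasP => l _ /=; case/and4P => h1 h2 h3 h4.
apply: (@psum_ne0 _ [ffun i : 'I_4 => nth false l i]); first exact: ge0.
by rewrite /Nt /W2 !ffunE /neq2v h1 h2 h3 h4 !mulr1 ltr01.
Qed.

End Pos.
Section Dec.
Variable C : numClosedFieldType.

Lemma sum0cond (g : gadget C 0) (F : {ffun port (arg g) -> bool} -> C) :
  \sum_(s : {ffun port (arg g) -> bool} | [forall i, s (ext g i) == [ffun=> false] i]) F s = \sum_s F s.
Proof. by apply: eq_bigl => s; apply/forallP => -[]. Qed.

Variables (g : gadget C 0) (d1 : 'I_(nD g)) (d2' : 'I_(nD g).-1).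
Let d2 := lift d1 d2'.
Let xf (s : {ffun port (arg g) -> bool}) : {ffun 'I_4 -> bool} := [ffun i => s (cext d1 d2' i)].
Let A (s : {ffun port (arg g) -> bool}) :=
  \prod_(v < nV g) fng g v [ffun j => s (Tagged (fun v => 'I_(arg g v)) j)].
Let Rc (s : {ffun port (arg g) -> bool}) :=
  \prod_(i < (nD g).-1.-1) neq2v C (s (cends d1 d2' i).1) (s (cends d1 d2' i).2).

Lemma dec (W : {ffun 'I_4 -> bool} -> C) :
  \sum_(s : {ffun port (arg g) -> bool}) A s * (Rc s * W (xf s)) =
  \sum_x Defs.gval (cutg d1 d2') x * W x.
Proof.
rewrite (partition_big xf xpredT) //=.
apply: eq_big => [x //|x _].
rewrite /Defs.gval big_distrl /=.
apply: eq_big => [s|s /eqP Es].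
  apply/eqP/forallP => [<- i|H]; first by rewrite /xf ffunE.
  by apply/ffunP => i; rewrite /xf ffunE; apply/eqP/H.
by rewrite Es mulrA.
Qed.

Lemma cv_g : closed_value g = \sum_s A s * (Rc s * W1 C (xf s)).
Proof.
rewrite /closed_value /Defs.gval sum0cond; apply: eq_bigr => s _; congr (_ * _).
rewrite (bigD1_ord d1) // (bigD1_ord d2') //.
by rewrite /W1 /xf !ffunE /= mulrA mulrC.
Qed.

Lemma cv_swap : closed_value (swapg d1 d2) = \sum_s A s * (Rc s * W2 C (xf s)).
Proof.
rewrite /closed_value /Defs.gval sum0cond; apply: eq_bigr => s _; congr (_ * _).
rewrite (bigD1_ord d1) // (bigD1_ord d2') //= /sends tpermL tpermR.
rewrite /W2 /xf !ffunE /= mulrA mulrC; congr (_ * _).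
apply: eq_bigr => i _; rewrite tpermD //.
  by rewrite neq_lift.
by apply/eqP => /lift_inj /eqP; rewrite (negbTE (neq_lift _ _)).
Qed.

Lemma swap_zero (calF : signature C -> Prop) :
  premiseP calF -> Defs.over calF g ->
  (closed_value (swapg d1 d2) == 0) = (closed_value g == 0).
Proof.
case=> _ P4 ov.
have [lam [tau Ht]] : exists (lam : C) (tau : {perm 'I_4}), forall x : {ffun 'I_4 -> bool},
   [ffun x => Defs.gval (cutg d1 d2') x] x = lam * neq2v C (x (tau (inord 0))) (x (tau (inord 1)))
                 * neq2v C (x (tau (inord 2))) (x (tau (inord 3))).
  by apply: P4; exists (cutg d1 d2'); split => // x; rewrite ffunE.
have G x : Defs.gval (cutg d1 d2') x = lam * Nt C tau x.
  by have := Ht x; rewrite ffunE /Nt mulrA.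
have [S1 S2] := S_ne0 C tau.
rewrite cv_swap cv_g !dec.
under eq_bigr do rewrite G -mulrA.
under [X in _ = (X == 0)]eq_bigr do rewrite G -mulrA.
by rewrite -!big_distrr /= !mulf_eq0 (negbTE S1) (negbTE S2).
Qed.

End Dec.
Lemma neq2vC (C : numClosedFieldType) a b : neq2v C a b = neq2v C b a.
Proof. by rewrite /neq2v eq_sym. Qed.

Lemma flip_value (C : numClosedFieldType) (g : gadget C 0) d0 :
  closed_value (@flipg C g d0) = closed_value g.
Proof.
rewrite /closed_value /Defs.gval !sum0cond; apply: eq_bigr => s _; congr (_ * _).
apply: eq_bigr => d _; rewrite /= /fends; case: ifP => //= _; exact: neq2vC.
Qed.

Lemma key (C : numClosedFieldType) (calF : signature C -> Prop) (F : signature C) :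
  premiseP calF -> calF F -> ~~ odd (projT1 F) ->
  forall g : gadget C 0, F_network F g -> (closed_value g == 0) = (Phi F == 0).
Proof.
move=> hP hF hev g Hg.
have evg (h : gadget C 0) : F_network F h -> forall v, ~~ odd (arg h v).
  by case=> _ H v; have /= -> := congr1 (@projT1 _ _) (H v).
pose Q (h : gadget C 0) := F_network F h /\ (closed_value h == 0) = (closed_value g == 0).
have [h [[Fh Zh] [eh ch]]] : exists h, Q h /\ (forall v, ~~ odd (arg h v)) /\ forall d, canb (g:=h) d.
  apply: reach; [ | | exact: evg Hg | by split].
  - move=> h d1 d2 n12 [Fh Zh]; split; first exact: Fh.
    case: (unliftP d1 d2) => [d2' E|E]; last by move: n12; rewrite E eqxx.
    rewrite E (@swap_zero _ h d1 d2' calF) //.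
    by move=> v; rewrite (proj2 Fh v).
  - by move=> h d [Fh Zh]; split; [exact: Fh | rewrite flip_value].
rewrite -Zh canon_value // (eq_bigr (fun _ => Phi F)); last by move=> v _; rewrite (proj2 Fh v).
by rewrite prodr_const card_ord expf_eq0 (proj1 Fh).
Qed.

Unset Implicit Arguments.

Theorem mainTheorem10 (R : realType) (calF : signature R[i] -> Prop)
  (F : signature R[i]) :
  premiseP calF -> calF F -> ~~ odd (projT1 F) ->
  (forall g : gadget R[i] 0, F_network F g -> closed_value g = 0) \/
  (forall g : gadget R[i] 0, F_network F g -> closed_value g != 0).
Proof.
move=> hP hF hev; have K := key hP hF hev.
case: (boolP (Phi F == 0)) => H; [left|right] => g Hg.
  by apply/eqP; rewrite K.
by rewrite K.
Qed.
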